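(* Let $X\in\mathcal M_{\mathbf r}$, $V\in\mathrm T_X\mathcal M_{\mathbf r}$, $Z\in\mathbb R^{n_1\times\cdots\times n_d}$ and $i,j\in[d]$. The tensor $W:=\mathcal P_X^i(\mathrm D_V\mathcal P_X^j)(Z)$ lies in the range of $\mathcal P_X^i$ and can be written $W(i_1,\dots,i_d)=U_1(i_1)\cdots U_{i-1}(i_{i-1})\,\delta\tilde V_i(i_i)\,\tilde U_{i+1}(i_{i+1})\cdots\tilde U_d(i_d)$ for a core $\delta\tilde V_i\in\mathbb R^{r_{i-1}\times n_i\times r_i}$, so that $W^{<i>}=(I_{n_i}\otimes X_{\le i-1})\delta\tilde V_i^L\tilde X_{\ge i+1}^\top$. If a matrix $B\in\mathbb R^{n_ir_{i-1}\times r_i}$ satisfies $W^{<i>}=(I_{n_i}\otimes X_{\le i-1})B\tilde X_{\ge i+1}^\top$, then $B=\delta\tilde V_i^L$.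
   Context: Fix $d\ge2$, positive integers $n_1,\dots,n_d$, $\mathbf r=(r_1,\dots,r_{d-1})$, $r_0=r_d=1$. Flattening $Z^{<\mu>}\in\mathbb R^{(n_1\cdots n_\mu)\times(n_{\mu+1}\cdots n_d)}$: rows indexed by $(i_1,\dots,i_\mu)$, columns by $(i_{\mu+1},\dots,i_d)$, colexicographic order. $\mathcal M_{\mathbf r}$: tensors with $(\mathrm{rank}\,Z^{<1>},\dots,\mathrm{rank}\,Z^{<d-1>})=\mathbf r$, a Riemannian submanifold of Euclidean space. $X$ has a minimal (sizes equal to TT-rank) left-orthogonal TT decomposition $U_1,\dots,U_d$ ($U_k\in\mathbb R^{r_{k-1}\times n_k\times r_k}$, $X(i_1,\dots,i_d)=U_1(i_1)\cdots U_d(i_d)$, $(U_k^L)^\top U_k^L=I$ for $k<d$, where $U^L=U^{<2>}$, $U^R=U^{<1>}$) and a minimal right-orthogonal TT decomposition $\tilde U_1,\dots,\tilde U_d$ ($\tilde U_k^R(\tilde U_k^R)^\top=I$ for $k\ge2$). Interface matrices: $X_{\le0}=1$, $X_{\le k}=(I_{n_k}\otimes X_{\le k-1})U_k^L$; $\tilde X_{\ge d+1}=1$, $\tilde X_{\ge k}^\top=\tilde U_k^R(\tilde X_{\ge k+1}^\top\otimes I_{n_k})$. Projectors for $Y\in\mathcal M_{\mathbf r}$ (independent of decomposition choices): $(\mathcal P_Y^kZ)^{<k>}=(I_{n_k}\otimes Y_{\le k-1}Y_{\le k-1}^\top-Y_{\le k}Y_{\le k}^\top)Z^{<k>}\tilde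 Y_{\ge k+1}\tilde Y_{\ge k+1}^\top$ for $k\in[d-1]$, $(\mathcal P_Y^dZ)^{<d>}=(I_{n_d}\otimes Y_{\le d-1}Y_{\le d-1}^\top)Z^{<d>}$. $(\mathrm D_V\mathcal P_X^j)Z:=\lim_{t\to0}(\mathcal P^j_{c(t)}Z-\mathcal P^j_{c(0)}Z)/t$ for a smooth curve $c$ in $\mathcal M_{\mathbf r}$ with $c(0)=X$, $c'(0)=V$. *)

(* Defs.v *)
From HB Require Import structures.
From mathcomp Require Import all_boot all_order all_algebra.
From mathcomp Require Import boolp classical_sets reals topology normedtype derive.
From Stdlib Require Import ClassicalEpsilon.
Set Implicit Arguments. Unset Strict Implicit. Unset Printing Implicit Defensive.
Import Order.TTheory GRing.Theory Num.Theory.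
Local Open Scope ring_scope.

(* Conventions:
   - a "matrix" is a function nat -> nat -> R, only entries in the stated
     range matter (sizes are passed explicitly);
   - a tensor of size n_1 x ... x n_d is a function nat -> R on its
     colexicographic linear index l = i_1 + n_1 i_2 + n_1 n_2 i_3 + ...,
     only l < n_1 * ... * n_d matters;
   - a TT core family is U : nat -> nat -> nat -> nat -> R,
     U k alpha i beta = U_k(alpha, i, beta) (k = 1..d). *)

Section TT.
Variable R : realType.

Definition mat := nat -> nat -> R.
Definition tensor := nat -> R.
Definition core3 := nat -> nat -> nat -> R.
Definition cores := nat -> core3.

Definition mmul (p : nat) (A B : mat) : mat :=
  fun a b => \sum_(l < p) A a l * B l b.
Definition mtr (A : mat) : mat := fun a b => A b a.
Definition msub (A B : mat) : mat := fun a b => A a b - B a b.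
Definition idm : mat := fun a b => (a == b)%:R.
Definition ones11 : mat := fun _ _ => 1.
Definition kron (m2 n2 : nat) (A B : mat) : mat :=
  fun a b => A (a %/ m2)%N (b %/ n2)%N * B (a %% m2)%N (b %% n2)%N.
Definition mxeq (m n : nat) (A B : mat) : Prop :=
  forall a b, (a < m)%N -> (b < n)%N -> A a b = B a b.
Definition to_mx (m n : nat) (A : mat) : 'M[R]_(m, n) :=
  \matrix_(a < m, b < n) A a b.

Variables (d : nat) (n r : nat -> nat).

Definition Pn (k : nat) : nat := (\prod_(1 <= m < k.+1) n m)%N.
Definition Qn (k : nat) : nat := (\prod_(k.+1 <= m < d.+1) n m)%N.
Definition Ntot : nat := Pn d.

Definition flat (k : nat) (Z : tensor) : mat := fun a b => Z (a + Pn k * b)%N.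
Definition unflat (k : nat) (A : mat) : tensor :=
  fun l => A (l %% Pn k)%N (l %/ Pn k)%N.

Definition inM (Y : tensor) : Prop :=
  forall mu, (1 <= mu <= d.-1)%N ->
    \rank (to_mx (Pn mu) (Qn mu) (flat mu Y)) = r mu.

Definition cL (k : nat) (G : core3) : mat :=
  fun a b => G (a %% r k.-1)%N (a %/ r k.-1)%N b.
Definition cR (k : nat) (G : core3) : mat :=
  fun a b => G a (b %% n k)%N (b %/ n k)%N.

Fixpoint Xle (U : cores) (k : nat) : mat :=
  match k with
  | 0 => ones11
  | k'.+1 => mmul (n k'.+1 * r k') (kron (Pn k') (r k') idm (Xle U k'))
                  (cL k'.+1 (U k'.+1))
  end.

(* XgeT_aux U m = \tilde X_{>= d+1-m}^T, with
   \tilde X_{>= k}^T = \tilde U_k^R (\tilde X_{>= k+1}^T (x) I_{n_k}) *)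
Fixpoint XgeT_aux (U : cores) (m : nat) : mat :=
  match m with
  | 0 => ones11
  | m'.+1 => mmul (n (d - m')%N * r (d - m')%N)%N (cR (d - m')%N (U (d - m')%N))
                  (kron (n (d - m')%N) (n (d - m')%N) (XgeT_aux U m') idm)
  end.
Definition XgeT (U : cores) (k : nat) : mat := XgeT_aux U (d.+1 - k).

Definition lo_decomp (Y : tensor) (U : cores) : Prop :=
  (forall l, (l < Ntot)%N -> Y l = Xle U d l 0%N) /\
  forall k, (1 <= k <= d.-1)%N ->
    mxeq (r k) (r k) (mmul (n k * r k.-1) (mtr (cL k (U k))) (cL k (U k))) idm.

Definition ro_decomp (Y : tensor) (U : cores) : Prop :=
  (forall l, (l < Ntot)%N -> Y l = XgeT U 1 0%N l) /\
  forall k, (2 <= k <= d)%N ->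
    mxeq (r k.-1) (r k.-1) (mmul (n k * r k) (cR k (U k)) (mtr (cR k (U k)))) idm.

Definition zero_cores : cores := fun _ _ _ _ => 0.
Definition lo_of (Y : tensor) : cores :=
  epsilon (inhabits zero_cores) (lo_decomp Y).
Definition ro_of (Y : tensor) : cores :=
  epsilon (inhabits zero_cores) (ro_decomp Y).

Definition Proj (k : nat) (Y Z : tensor) : tensor :=
  let U := lo_of Y in
  let Ut := ro_of Y in
  let L1 := kron (Pn k.-1) (Pn k.-1) idm
              (mmul (r k.-1) (Xle U k.-1) (mtr (Xle U k.-1))) in
  let L := if (k < d)%N then msub L1 (mmul (r k) (Xle U k) (mtr (Xle U k)))
           else L1 in
  let Rt := mmul (r k) (mtr (XgeT Ut k.+1)) (XgeT Ut k.+1) in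
  unflat k (mmul (Qn k) (mmul (Pn k) L (flat k Z)) Rt).

End TT.

Definition smooth (R : realType) (f : R -> R) : Prop :=
  forall (k : nat) (x : R), @derivable R R^o R^o (iter k (@derive1 R R^o) f) x 1.

(* Main.v *)
Require Import Defs.
From HB Require Import structures.
From mathcomp Require Import all_boot all_order all_algebra.
From mathcomp Require Import boolp classical_sets reals topology normedtype derive.
From mathcomp Require Import zify.
From Stdlib Require Import ClassicalEpsilon.
Import Order.TTheory GRing.Theory Num.Theory.
Local Open Scope ring_scope.
Local Open Scope classical_set_scope.
Import numFieldNormedType.Exports.

Section Gen.
Variable R : realType.
Implicit Types A B C : mat R.

Lemma divmodK (x q j : nat) : (x < q)%N -> ((x + q * j) %/ q = j)%N /\ ((x + q * j) %% q = x)%N.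
Proof.
move=> h; have q0 : (0 < q)%N by apply: leq_ltn_trans h.
split; first by rewrite mulnC divnDMl // divn_small.
by rewrite mulnC addnC modnMDl modn_small.
Qed.

Lemma sum_split (m k : nat) (f : nat -> R) :
  \sum_(l < m * k) f l = \sum_(j < k) \sum_(c < m) f (c + m * j)%N.
Proof.
elim: k => [|k IH]; first by rewrite muln0 !big_ord0.
rewrite big_ord_recr /= -IH -!(big_mkord xpredT) mulnSr.
rewrite (@big_cat_nat _ _ _ (m * k)%N) //= ?leq_addr //; congr (_ + _).
rewrite -{1}[(m * k)%N]add0n big_addn addKn big_mkord.
by [].
Qed.

Lemma sum_split' (m k : nat) (f : nat -> R) :
  \sum_(0 <= l < m * k) f l = \sum_(j < k) \sum_(c < m) f (c + m * j)%N.
Proof. by rewrite big_mkord sum_split. Qed.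

Lemma mk_lt (m k : nat) (c : 'I_m) (j : 'I_k) : (c + m * j < m * k)%N.
Proof.
have hc := ltn_ord c; have hj := ltn_ord j.
apply: (@leq_trans (m * j.+1)); first by rewrite mulnS ltn_add2r.
by rewrite leq_mul2l hj orbT.
Qed.
Arguments mk_lt {m k}.
Definition mkidx m k (c : 'I_m) (j : 'I_k) : 'I_(m * k) := Ordinal (mk_lt c j).

Arguments mkidx {m k}.
Lemma sum_splitO (m k : nat) (F : 'I_(m * k) -> R) :
  \sum_(l < m * k) F l = \sum_(j < k) \sum_(c < m) F (mkidx c j).
Proof.
pose f l := match (insub l : option 'I_(m * k)) with Some l' => F l' | None => 0 end.
have := sum_split m k f; rewrite /f.
under eq_bigr do rewrite valK.
move=> ->; apply: eq_bigr => j _; apply: eq_bigr => c _.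
by rewrite -[(c + m * j)%N]/(nat_of_ord (mkidx c j)) valK.
Qed.

Lemma sum_delta (n0 a0 : nat) (F : 'I_n0 -> R) (h : (a0 < n0)%N) :
  \sum_(j < n0) (a0 == j)%:R * F j = F (Ordinal h).
Proof.
rewrite (bigD1 (Ordinal h)) //= eqxx mul1r big1 ?addr0 //.
move=> j /eqP hj; case: eqP => [e|_]; last by rewrite mul0r.
by exfalso; apply: hj; apply: val_inj; rewrite /= e.
Qed.

Lemma mmulA p q A B C : mmul q (mmul p A B) C = mmul p A (mmul q B C).
Proof.
apply/funext => a; apply/funext => b; rewrite /mmul.
under eq_bigr do rewrite mulr_suml.
rewrite exchange_big /=; apply: eq_bigr => l _; rewrite mulr_sumr.
by apply: eq_bigr => k _; rewrite mulrA.
Qed.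

Definition tm := @to_mx R.

Lemma tm_mul m p q A B : to_mx m q (mmul p A B) = to_mx m p A *m to_mx p q B.
Proof. by apply/matrixP => a b; rewrite !mxE; apply: eq_bigr => l _; rewrite !mxE. Qed.

Lemma tm_tr m q A : to_mx m q (mtr A) = (to_mx q m A)^T.
Proof. by apply/matrixP => a b; rewrite !mxE. Qed.

Lemma tm_sub m q A B : to_mx m q (msub A B) = to_mx m q A - to_mx m q B.
Proof. by apply/matrixP => a b; rewrite !mxE. Qed.

Lemma tm_idm m : to_mx m m (@idm R) = 1%:M.
Proof. by apply/matrixP => a b; rewrite !mxE. Qed.

Lemma mxeq_tm m q A B : mxeq m q A B <-> to_mx m q A = to_mx m q B.
Proof.
split=> [h|h a b ha hb]; first by apply/matrixP => a b; rewrite !mxE h.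
by have := congr1 (fun M : 'M[R]_(m, q) => M (Ordinal ha) (Ordinal hb)) h; rewrite !mxE.
Qed.

Lemma tm_ext m q A B : (forall a b, (a < m)%N -> (b < q)%N -> A a b = B a b) ->
  to_mx m q A = to_mx m q B.
Proof. by move=> h; apply/mxeq_tm. Qed.

Definition mat_of m q (M : 'M[R]_(m, q)) : mat R :=
  fun a b => match (insub a : option 'I_m), (insub b : option 'I_q) with
             | Some a', Some b' => M a' b' | _, _ => 0 end.

Arguments mat_of {m q}.
Lemma tm_of m q (M : 'M[R]_(m, q)) : to_mx m q (mat_of M) = M.
Proof. by apply/matrixP => a b; rewrite !mxE /mat_of !valK. Qed.

Lemma tm_kron_ext n0 p q A B : to_mx p q A = to_mx p q B ->
  to_mx (n0 * p) (n0 * q) (kron p q (@idm R) A) = to_mx (n0 * p) (n0 * q) (kron p q (@idm R) B).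
Proof.
move/mxeq_tm => h; apply: tm_ext => a b ha hb; rewrite /kron h //.
  by rewrite ltn_mod; case: p ha {h} => //; rewrite muln0.
by rewrite ltn_mod; case: q hb {h} => //; rewrite muln0.
Qed.

Lemma tm_kron_mul n0 p q s A B :
  to_mx (n0 * p) (n0 * q) (kron p q (@idm R) A) *m to_mx (n0 * q) (n0 * s) (kron q s (@idm R) B)
  = to_mx (n0 * p) (n0 * s) (kron p s (@idm R) (mmul q A B)).
Proof.
rewrite -tm_mul; apply: tm_ext => a c ha hc.
have p0 : (0 < p)%N by case: p ha => //; rewrite muln0.
have hp : (a %/ p < n0)%N by rewrite ltn_divLR // mulnC.
rewrite /mmul /kron mulnC sum_splitO /=.
under eq_bigr => j _.
  under eq_bigr => x _.
    have [-> ->] := @divmodK x q j (ltn_ord x).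
    rewrite /idm -!mulrA [A _ _ * _]mulrCA.
  over.
  rewrite -mulr_sumr.
  rewrite -mulr_sumr.
over.
rewrite /= (@sum_delta _ _ _ hp) /=.
case: eqP => [e|ne]; first by rewrite /idm e eqxx.
by rewrite /idm; case: eqP => // _; rewrite !mul0r.
Qed.

Lemma tm_kron_tr n0 p q A :
  to_mx (n0 * q) (n0 * p) (mtr (kron p q (@idm R) A)) =
  to_mx (n0 * q) (n0 * p) (kron q p (@idm R) (mtr A)).
Proof. by apply: tm_ext => a b _ _; rewrite /mtr /kron /idm eq_sym. Qed.

Lemma tm_kron_idm n0 p : to_mx (n0 * p) (n0 * p) (kron p p (@idm R) (@idm R)) = 1%:M.
Proof.
apply/matrixP => a b; rewrite !mxE /kron /idm -natrM.
case: (eqVneq a b) => [->|ne]; first by rewrite !eqxx.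
case: eqP => // e1; case: eqP => // e2; exfalso; move/eqP: ne; apply.
by apply: val_inj; rewrite /= (divn_eq a p) (divn_eq b p) e1 e2.
Qed.

Lemma rank_span (p q s : nat) (F : 'M[R]_(p, q)) (T T' : 'M[R]_(s, q)) G G' :
  F = G *m T -> F = G' *m T' -> \rank F = s -> exists D, T' = D *m T.
Proof.
move=> h1 h2 hr; apply/submxP.
have FT : (F <= T)%MS by rewrite h1 submxMl.
have FT' : (F <= T')%MS by rewrite h2 submxMl.
have T'F : (T' <= F)%MS.
  have [le <-] := mxrank_leqif_sup FT'.
  by rewrite eqn_leq le hr rank_leq_row.
exact: submx_trans T'F FT.
Qed.

Lemma left_span (p q s : nat) (F : 'M[R]_(p, q)) (A A' : 'M[R]_(p, s)) G G' :
  F = A *m G -> F = A' *m G' -> \rank F = s -> exists D, A' = A *m D.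
Proof.
move=> h1 h2 hr.
have [D hD] := @rank_span q p s F^T A^T A'^T G^T G'^T
  ltac:(by rewrite h1 trmx_mul) ltac:(by rewrite h2 trmx_mul) ltac:(by rewrite mxrank_tr).
by exists D^T; rewrite -[A']trmxK hD trmx_mul trmxK.
Qed.
End Gen.
Arguments mkidx {m k}.
Arguments mk_lt {m k}.
Arguments mat_of {R m q}.

Section TT2.
Variable R : realType.
Variables (d : nat) (n r : nat -> nat).
Hypothesis hn : forall k, (1 <= k <= d)%N -> (0 < n k)%N.

Definition E a b := (\prod_(a <= t < b) n t)%N.

Lemma P_S k : Pn n k.+1 = (Pn n k * n k.+1)%N.
Proof. by rewrite /Pn big_nat_recr. Qed.

Lemma Q_S k : (k < d)%N -> Qn d n k = (n k.+1 * Qn d n k.+1)%N.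
Proof. by move=> h; rewrite /Qn big_ltn. Qed.

Lemma E_cat x y z : (x <= y)%N -> (y <= z)%N -> E x z = (E x y * E y z)%N.
Proof. by move=> h1 h2; rewrite /E (@big_cat_nat _ _ _ y). Qed.

Lemma E_gt0 a b : (1 <= a)%N -> (b <= d.+1)%N -> (0 < E a b)%N.
Proof.
move=> ha hb; rewrite /E big_nat_cond; apply: (big_ind (fun x => 0 < x)%N) => //.
  by move=> x y; rewrite muln_gt0 => -> ->.
move=> t /andP [/andP [h1 h2] _]; apply: hn; rewrite (leq_trans ha h1) /=.
by rewrite -ltnS (leq_trans h2 hb).
Qed.

Lemma Pn_gt0 k : (k <= d)%N -> (0 < Pn n k)%N.
Proof. by move=> h; apply: E_gt0. Qed.

Lemma Qn_gt0 k : (0 < Qn d n k)%N.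
Proof.
rewrite /Qn big_nat_cond; apply: (big_ind (fun x => 0 < x)%N) => //.
  by move=> x y; rewrite muln_gt0 => -> ->.
by move=> t /andP [/andP [h1 h2] _]; apply: hn; rewrite (leq_trans _ h1) //= -ltnS.
Qed.

Lemma PQ k : (k <= d)%N -> (Pn n k * Qn d n k)%N = Ntot d n.
Proof. by move=> h; rewrite /Ntot /Pn /Qn -/(E 1 k.+1) -/(E k.+1 d.+1) -E_cat. Qed.

Lemma lt_lin a p x e : (a < p)%N -> (x < e)%N -> (a + p * x < p * e)%N.
Proof.
move=> ha hx; apply: (@leq_trans (p * x.+1)); first by rewrite mulnS ltn_add2r.
by rewrite leq_mul2l hx orbT.
Qed.

Lemma Xle_step (U : cores R) m a i b : (a < Pn n m)%N -> (i < n m.+1)%N ->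
  Xle n r U m.+1 (a + Pn n m * i)%N b = \sum_(al < r m) Xle n r U m a al * U m.+1 al i b.
Proof.
move=> ha hi /=; rewrite /mmul /kron /cL /= mulnC sum_splitO /=.
under eq_bigr => j _.
  under eq_bigr => x _.
    have [-> ->] := @divmodK x (r m) j (ltn_ord x).
    have [-> ->] := @divmodK a (Pn n m) i ha.
    rewrite /idm -mulrA.
  over.
  rewrite -mulr_sumr.
over.
by rewrite /= (@sum_delta R _ _ _ hi) /=.
Qed.

Lemma E_nn m : E m m = 1%N.
Proof. by rewrite /E big_geq. Qed.

Lemma E_1 m : E m m.+1 = n m.
Proof. by rewrite /E big_nat1. Qed.

Lemma Xle_split (U : cores R) k s : (k + s <= d)%N -> exists T : core3 R,
  forall a b be, (a < Pn n k)%N -> (b < E k.+1 (k + s).+1)%N -> (be < r (k + s))%N ->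
  Xle n r U (k + s) (a + Pn n k * b)%N be = \sum_(al < r k) Xle n r U k a al * T al b be.
Proof.
elim: s => [|s IH] hks.
  exists (fun al _ be => @idm R al be) => a b be ha hb hbe; move: hb hbe; rewrite addn0 E_nn ltnS leqn0 => /eqP -> hbe.
  rewrite muln0 addn0; under eq_bigr do rewrite mulrC /idm eq_sym.
  by rewrite (@sum_delta R _ _ _ hbe).
have [T HT] := IH ltac:(lia).
set e := E k.+1 (k + s).+1.
have PE : Pn n (k + s) = (Pn n k * e)%N.
  by rewrite /Pn -/(E 1 (k + s).+1) -/(E 1 k.+1) (@E_cat 1 k.+1) // ltnS leq_addr.
have e0 : (0 < e)%N by apply: E_gt0 => //; lia.
exists (fun al b be => \sum_(g < r (k + s)) T al (b %% e)%N g * U (k + s).+1 g (b %/ e)%N be).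
move=> a b be ha hb hbe; rewrite addnS.
have hx : (b %% e < e)%N by rewrite ltn_pmod.
have hy : (b %/ e < n (k + s).+1)%N.
  rewrite ltn_divLR // mulnC; move: hb; rewrite addnS (@E_cat k.+1 (k + s).+1) ?E_1 //.
  by rewrite ltnS leq_addr.
have eq : (a + Pn n k * b = (a + Pn n k * (b %% e)) + Pn n (k + s) * (b %/ e))%N.
  rewrite PE; set x := (b %% e)%N; set y := (b %/ e)%N.
  have hb' : b = (y * e + x)%N := divn_eq b e.
  rewrite {1}hb'; nia.
rewrite eq Xle_step //; last by rewrite PE lt_lin.
under eq_bigr => g _ do rewrite HT //.
under eq_bigr do rewrite mulr_suml.
rewrite exchange_big /=; apply: eq_bigr => al _; rewrite mulr_sumr.
by apply: eq_bigr => g _; rewrite mulrA.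
Qed.

Lemma Pn0 : Pn n 0 = 1%N.
Proof. by rewrite /Pn big_geq. Qed.

Lemma Xle_orth (U : cores R) (hr0 : r 0 = 1%N)
  (hc : forall k, (1 <= k <= d.-1)%N ->
     mxeq (r k) (r k) (mmul (n k * r k.-1) (mtr (cL r k (U k))) (cL r k (U k))) (@idm R))
  k : (k <= d.-1)%N ->
  to_mx (r k) (r k) (mmul (Pn n k) (mtr (Xle n r U k)) (Xle n r U k)) = 1%:M.
Proof.
elim: k => [|k IH] hk.
  apply/matrixP => b b'; rewrite !mxE.
  have e : b = b'.
    have h1 : (nat_of_ord b < 1)%N by rewrite -[1%N]hr0 ltn_ord.
    have h2 : (nat_of_ord b' < 1)%N by rewrite -[1%N]hr0 ltn_ord.
    apply: val_inj => /=; lia.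
  rewrite e eqxx /mmul Pn0 big_ord1 /mtr /=.
  by rewrite mulr1.
have IH' : forall al al' : 'I_(r k), \sum_(c < Pn n k) Xle n r U k c al * Xle n r U k c al' = (al == al')%:R.
  move=> al al'; have := IH (ltnW hk); move/matrixP => /(_ al al'); rewrite !mxE => <-.
  by apply: eq_bigr.
have hdk : (k < d)%N by move: hk; case: d => //= dd; lia.
apply/matrixP => b b'; rewrite !mxE.
have hck := hc k.+1 ltac:(lia) b b' (ltn_ord b) (ltn_ord b').
rewrite -[RHS]/(@idm R b b') -hck /mmul P_S sum_splitO [(n k.+1 * _)%N]mulnC sum_splitO.
apply: eq_bigr => j _.
have hj : (j < n k.+1)%N by [].
under eq_bigr => c _ do rewrite /mtr -[nat_of_ord (mkidx c j)]/(c + Pn n k * j)%N !Xle_step //.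
rewrite /cL /mtr /=.
under [RHS]eq_bigr => c _ do rewrite (proj1 (@divmodK c (r k) j (ltn_ord c))) (proj2 (@divmodK c (r k) j (ltn_ord c))).
under eq_bigr => c _ do rewrite big_distrlr /=.
rewrite exchange_big; under eq_bigr => al _ do rewrite exchange_big.
apply: eq_bigr => al _ /=.
under eq_bigr => al' _ do under eq_bigr => c _ do rewrite mulrACA.
under eq_bigr => al' _ do rewrite -mulr_suml IH'.
by rewrite (@sum_delta R _ _ (fun al' : 'I_(r k) => U k.+1 al j b * U k.+1 al' j b') (ltn_ord al)).
Qed.


Lemma Xge_step (U : cores R) k al i b : (1 <= k <= d)%N -> (i < n k)%N ->
  XgeT d n r U k al (i + n k * b)%N = \sum_(be < r k) U k al i be * XgeT d n r U k.+1 be b.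
Proof.
move=> /andP [k1 kd] hi; rewrite /XgeT subSn // subSS /= subKn //.
rewrite /mmul /kron /cR sum_splitO.
apply: eq_bigr => j _ /=.
under eq_bigr => c _.
  have [-> ->] := @divmodK c (n k) j (ltn_ord c).
  have [-> ->] := @divmodK i (n k) b hi.
  rewrite /idm mulrA mulrC eq_sym.
over.
by rewrite /= (@sum_delta R _ _ _ hi).
Qed.

Lemma Xge_split (U : cores R) k s : forall j, (j + s)%N = k -> (1 <= j)%N -> (k <= d.+1)%N ->
  exists S : core3 R, forall al c b, (al < r j.-1)%N -> (c < E j k)%N ->
  XgeT d n r U j al (c + E j k * b)%N = \sum_(be < r k.-1) S al c be * XgeT d n r U k be b.
Proof.
elim: s => [|s IH] j hjs j1 hk.
  rewrite addn0 in hjs; subst j.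
  exists (fun al _ be => @idm R al be) => al c b hal; rewrite E_nn ltnS leqn0 => /eqP ->.
  rewrite mul1n add0n /idm (@sum_delta R _ _ (fun be : 'I_(r k.-1) => XgeT d n r U k be b) hal).
  by [].
have [S HS] := IH j.+1 ltac:(lia) ltac:(lia) hk.
have nj0 : (0 < n j)%N by apply: hn; lia.
have EE : E j k = (n j * E j.+1 k)%N by rewrite (@E_cat j j.+1) ?E_1 //; lia.
exists (fun al c ga => \sum_(be < r j) U j al (c %% n j)%N be * S be (c %/ n j)%N ga).
move=> al c b hal hc.
have hx : (c %% n j < n j)%N by rewrite ltn_pmod.
have hy : (c %/ n j < E j.+1 k)%N by rewrite ltn_divLR // mulnC -EE.
have eq : (c + E j k * b = c %% n j + n j * (c %/ n j + E j.+1 k * b))%N.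
  rewrite EE; set x := (c %% n j)%N; set y := (c %/ n j)%N.
  have hc' : c = (y * n j + x)%N := divn_eq c (n j).
  rewrite {1}hc'; nia.
rewrite eq Xge_step //; last by lia.
under eq_bigr => be _ do rewrite HS //.
under eq_bigr do rewrite mulr_sumr.
rewrite exchange_big /=; apply: eq_bigr => ga _; rewrite mulr_suml.
by apply: eq_bigr => be _; rewrite mulrA.
Qed.

Lemma ord_one m (h : m = 1%N) (x y : 'I_m) : x = y.
Proof. by move: x y; rewrite h => x y; rewrite !ord1. Qed.

Lemma Qnd : Qn d n d = 1%N.
Proof. by rewrite /Qn big_geq. Qed.

Lemma Xge_orth (U : cores R) (hrd : r d = 1%N)
  (hc : forall k, (2 <= k <= d)%N ->
     mxeq (r k.-1) (r k.-1) (mmul (n k * r k) (cR n k (U k)) (mtr (cR n k (U k)))) (@idm R))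
  s : forall k, (k + s)%N = d.+1 -> (2 <= k)%N ->
  to_mx (r k.-1) (r k.-1) (mmul (Qn d n k.-1) (XgeT d n r U k) (mtr (XgeT d n r U k))) = 1%:M.
Proof.
elim: s => [|s IH] k hks hk2.
  rewrite addn0 in hks; subst k.
  apply/matrixP => b b'; rewrite !mxE.
  have e : b = b' by apply: ord_one.
  rewrite e eqxx /mmul /= Qnd big_ord1 /mtr /XgeT subnn /=.
  by rewrite mulr1.
case: k hks hk2 => [|k] // hks hk2.
have IH' : forall be be' : 'I_(r k.+1), \sum_(c < Qn d n k.+1) XgeT d n r U k.+2 be c * XgeT d n r U k.+2 be' c = (be == be')%:R.
  move=> be be'; have := IH k.+2 ltac:(lia) ltac:(lia); move/matrixP => /(_ be be'); rewrite !mxE => <-.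
  by apply: eq_bigr.
have hkd : (k < d)%N by lia.
apply/matrixP => b b'; rewrite !mxE /=.
have hck := hc k.+1 ltac:(lia) b b' (ltn_ord b) (ltn_ord b').
rewrite -[RHS]/(@idm R b b') -hck /mmul (Q_S k hkd) sum_splitO sum_splitO /mtr /cR /=.
have hk1 : (1 <= k.+1 <= d)%N by lia.
under eq_bigr => j _ do under eq_bigr => c _ do rewrite !Xge_step //.
under [RHS]eq_bigr => j _ do under eq_bigr => c _ do rewrite (proj1 (@divmodK c (n k.+1) j (ltn_ord c))) (proj2 (@divmodK c (n k.+1) j (ltn_ord c))).
rewrite exchange_big [RHS]exchange_big /=; apply: eq_bigr => c _.
under eq_bigr => j _ do rewrite big_distrlr /=.
rewrite exchange_big /=; apply: eq_bigr => be _.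
rewrite exchange_big /=.
under eq_bigr => be' _ do under eq_bigr => j _ do rewrite mulrACA.
under eq_bigr => be' _ do rewrite -mulr_sumr IH' mulrC.
by rewrite (@sum_delta R _ _ _ (ltn_ord be)).
Qed.

Lemma left_fact (X : tensor R) (U : cores R) (hrd : r d = 1%N)
  (hX : forall l, (l < Ntot d n)%N -> X l = Xle n r U d l 0%N) k : (k <= d)%N ->
  exists G : mat R, to_mx (Pn n k) (Qn d n k) (flat n k X) =
    to_mx (Pn n k) (r k) (Xle n r U k) *m to_mx (r k) (Qn d n k) G.
Proof.
move=> hkd; have [T HT] := Xle_split U k (d - k) (eq_ind_r (fun x => (x <= d)%N) (leqnn d) (subnKC hkd)).
rewrite (subnKC hkd) in HT.
exists (fun al b => T al b 0%N); rewrite -tm_mul; apply: tm_ext => a b ha hb.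
rewrite /flat hX; last by rewrite -(PQ _ hkd) lt_lin.
by rewrite HT // hrd.
Qed.

Lemma right_fact (X : tensor R) (U : cores R) (hr0 : r 0 = 1%N)
  (hX : forall l, (l < Ntot d n)%N -> X l = XgeT d n r U 1 0%N l) k : (k <= d)%N ->
  exists G : mat R, to_mx (Pn n k) (Qn d n k) (flat n k X) =
    to_mx (Pn n k) (r k) G *m to_mx (r k) (Qn d n k) (XgeT d n r U k.+1).
Proof.
move=> hkd; have [S HS] := @Xge_split U k.+1 k 1 (add1n k) (leqnn 1) hkd.
exists (fun c be => S 0%N c be); rewrite -tm_mul; apply: tm_ext => a b ha hb.
rewrite /flat hX; last by rewrite -(PQ _ hkd) lt_lin.
by rewrite HS // hr0.
Qed.
End TT2.
Theorem lemma11 (R : realType) (d : nat) (n r : nat -> nat)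
  (hd : (2 <= d)%N)
  (hn : forall k, (1 <= k <= d)%N -> (0 < n k)%N)
  (hr0 : r 0%N = 1%N) (hrd : r d = 1%N)
  (X : tensor R) (hX : inM d n r X)
  (U Ut : cores R) (hU : lo_decomp d n r X U) (hUt : ro_decomp d n r X Ut)
  (c : R -> tensor R)
  (hc_smooth : forall l, (l < Ntot d n)%N -> smooth (fun t => c t l))
  (hcM : forall t, inM d n r (c t))
  (hc0 : forall l, (l < Ntot d n)%N -> c 0 l = X l)
  (V : tensor R)
  (hV : forall l, (l < Ntot d n)%N -> @is_derive R R^o R^o 0 1 (fun t => c t l) (V l))
  (Z : tensor R) (i j : nat)
  (hi : (1 <= i <= d)%N) (hj : (1 <= j <= d)%N)
  (DPZ : tensor R)
  (hDPZ : forall l, (l < Ntot d n)%N ->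
     (fun t => (Proj d n r j (c t) Z l - Proj d n r j X Z l) / t)
       @ (0 : R)^' --> DPZ l) :
  let W := Proj d n r i X DPZ in
  let repr (B : mat R) : mat R :=
    mmul (r i)
      (mmul (n i * r i.-1) (kron (Pn n i.-1) (r i.-1) (@idm R) (Xle n r U i.-1)) B)
      (XgeT d n r Ut i.+1) in
  exists dV : core3 R,
    mxeq (Pn n i) (Qn d n i) (flat n i W) (repr (cL r i dV)) /\
    forall B : mat R,
      mxeq (Pn n i) (Qn d n i) (flat n i W) (repr B) ->
      mxeq (n i * r i.-1) (r i) B (cL r i dV).

Proof.
case: i hi => [//|k] hi W repr.
have hkd : (k < d)%N by lia.
pose U' := lo_of d n r X.
pose Ut' := ro_of d n r X.
have hU' : lo_decomp d n r X U' := epsilon_spec _ _ (ex_intro _ U hU).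
have hUt' : ro_decomp d n r X Ut' := epsilon_spec _ _ (ex_intro _ Ut hUt).
have [D1 HD1] : exists D1 : 'M[R]_(r k),
    to_mx (Pn n k) (r k) (Xle n r U' k) = to_mx (Pn n k) (r k) (Xle n r U k) *m D1.
  clear -hn hrd hU hU' hX hkd; case: k hkd => [|k] hkd.
    by exists 1%:M; rewrite mulmx1.
  have [G HG] := @left_fact R d n r hn X U hrd hU.1 k.+1 (ltnW hkd).
  have [G' HG'] := @left_fact R d n r hn X U' hrd hU'.1 k.+1 (ltnW hkd).
  apply: (left_span _ _ _ _ _ _ _ _ _ HG HG'); apply: hX; lia.
have [D2 HD2] : exists D2 : 'M[R]_(r k.+1),
    to_mx (r k.+1) (Qn d n k.+1) (XgeT d n r Ut' k.+2) =
    D2 *m to_mx (r k.+1) (Qn d n k.+1) (XgeT d n r Ut k.+2).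
  clear -hn hr0 hUt hUt' hX hkd; case: (ltnP k.+1 d) => hk1.
    have [G HG] := @right_fact R d n r hn X Ut hr0 hUt.1 k.+1 (ltnW hk1).
    have [G' HG'] := @right_fact R d n r hn X Ut' hr0 hUt'.1 k.+1 (ltnW hk1).
    apply: (rank_span _ _ _ _ _ _ _ _ _ HG HG'); apply: hX; lia.
  have ed : d = k.+1 by lia.
  exists 1%:M; rewrite mul1mx /XgeT ed subnn /=.
  by [].
have OA : (to_mx (Pn n k) (r k) (Xle n r U k))^T *m to_mx (Pn n k) (r k) (Xle n r U k) = 1%:M.
  rewrite -tm_tr -tm_mul; apply: (Xle_orth _ _ _ _ U hr0 hU.2 k); lia.
have OT : to_mx (r k.+1) (Qn d n k.+1) (XgeT d n r Ut k.+2) *m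
          (to_mx (r k.+1) (Qn d n k.+1) (XgeT d n r Ut k.+2))^T = 1%:M.
  rewrite -tm_tr -tm_mul; apply: (Xge_orth _ _ _ _ Ut hrd hUt.2 (d - k.+1) k.+2); lia.
have OK : (to_mx (n k.+1 * Pn n k) (n k.+1 * r k) (kron (Pn n k) (r k) (@idm R) (Xle n r U k)))^T
    *m to_mx (n k.+1 * Pn n k) (n k.+1 * r k) (kron (Pn n k) (r k) (@idm R) (Xle n r U k)) = 1%:M.
  rewrite -tm_tr tm_kron_tr tm_kron_mul (@tm_kron_ext R _ _ _ _ (@idm R)) ?tm_kron_idm //.
  by rewrite tm_mul tm_tr OA tm_idm.
have PE : Pn n k.+1 = (n k.+1 * Pn n k)%N by rewrite P_S mulnC.
pose L1 := kron (Pn n k) (Pn n k) (@idm R) (mmul (r k) (Xle n r U' k) (mtr (Xle n r U' k))).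
pose Lx := if (k.+1 < d)%N then msub L1 (mmul (r k.+1) (Xle n r U' k.+1) (mtr (Xle n r U' k.+1))) else L1.
pose Rtx := mmul (r k.+1) (mtr (XgeT d n r Ut' k.+2)) (XgeT d n r Ut' k.+2).
have PW : forall l, W l = unflat n k.+1 (mmul (Qn d n k.+1) (mmul (Pn n k.+1) Lx (flat n k.+1 DPZ)) Rtx) l by [].
have flatW0 : to_mx (Pn n k.+1) (Qn d n k.+1) (flat n k.+1 W) =
   to_mx (Pn n k.+1) (Pn n k.+1) Lx *m to_mx (Pn n k.+1) (Qn d n k.+1) (flat n k.+1 DPZ)
   *m to_mx (Qn d n k.+1) (Qn d n k.+1) Rtx.
  rewrite -!tm_mul; apply: tm_ext => a b ha hb.
  by rewrite {1}/flat PW /unflat; have [-> ->] := divmodK a (Pn n k.+1) b ha.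
rewrite PE in flatW0.
have L1eq : to_mx (n k.+1 * Pn n k) (n k.+1 * Pn n k) L1 =
   to_mx (n k.+1 * Pn n k) (n k.+1 * r k) (kron (Pn n k) (r k) (@idm R) (Xle n r U k)) *m
   to_mx (n k.+1 * r k) (n k.+1 * Pn n k)
     (kron (r k) (Pn n k) (@idm R) (mat_of (D1 *m (to_mx (Pn n k) (r k) (Xle n r U' k))^T))).
  rewrite tm_kron_mul /L1; apply: tm_kron_ext.
  by rewrite !tm_mul tm_tr tm_of {1}HD1 mulmxA.
have XU : to_mx (n k.+1 * Pn n k) (r k.+1) (Xle n r U' k.+1) =
   to_mx (n k.+1 * Pn n k) (n k.+1 * r k) (kron (Pn n k) (r k) (@idm R) (Xle n r U k)) *m
   (to_mx (n k.+1 * r k) (n k.+1 * r k) (kron (r k) (r k) (@idm R) (mat_of D1)) *m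
    to_mx (n k.+1 * r k) (r k.+1) (cL r k.+1 (U' k.+1))).
  change (Xle n r U' k.+1) with
    (mmul (n k.+1 * r k) (kron (Pn n k) (r k) (@idm R) (Xle n r U' k)) (cL r k.+1 (U' k.+1))).
  rewrite tm_mul mulmxA tm_kron_mul; congr (_ *m _); apply: tm_kron_ext.
  by rewrite tm_mul tm_of HD1.
have [N' HN'] : exists N' : 'M[R]_(n k.+1 * r k, n k.+1 * Pn n k),
    to_mx (n k.+1 * Pn n k) (n k.+1 * Pn n k) Lx =
    to_mx (n k.+1 * Pn n k) (n k.+1 * r k) (kron (Pn n k) (r k) (@idm R) (Xle n r U k)) *m N'.
  rewrite /Lx; case: ifP => _; last by eexists; exact: L1eq.
  eexists; rewrite tm_sub L1eq tm_mul tm_tr XU -mulmxA -mulmxBr; reflexivity.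
have Rteq : to_mx (Qn d n k.+1) (Qn d n k.+1) Rtx =
    (to_mx (r k.+1) (Qn d n k.+1) (XgeT d n r Ut' k.+2))^T *m D2 *m
    to_mx (r k.+1) (Qn d n k.+1) (XgeT d n r Ut k.+2).
  by rewrite /Rtx tm_mul tm_tr {2}HD2 mulmxA.
pose B0m := N' *m to_mx (n k.+1 * Pn n k) (Qn d n k.+1) (flat n k.+1 DPZ) *m
    ((to_mx (r k.+1) (Qn d n k.+1) (XgeT d n r Ut' k.+2))^T *m D2).
have flatW : to_mx (n k.+1 * Pn n k) (Qn d n k.+1) (flat n k.+1 W) =
    to_mx (n k.+1 * Pn n k) (n k.+1 * r k) (kron (Pn n k) (r k) (@idm R) (Xle n r U k)) *m B0m *m
    to_mx (r k.+1) (Qn d n k.+1) (XgeT d n r Ut k.+2).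
  by rewrite flatW0 HN' Rteq /B0m !mulmxA.
pose dV : core3 R := fun al i be => mat_of B0m (al + r k * i)%N be.
have cLdV : to_mx (n k.+1 * r k) (r k.+1) (cL r k.+1 dV) = B0m.
  rewrite -[RHS]tm_of; apply: tm_ext => a b _ _; rewrite /cL /dV /=.
  by rewrite addnC [(r k * _)%N]mulnC -divn_eq.
have reprE : forall B, to_mx (n k.+1 * Pn n k) (Qn d n k.+1) (repr B) =
    to_mx (n k.+1 * Pn n k) (n k.+1 * r k) (kron (Pn n k) (r k) (@idm R) (Xle n r U k)) *m
    to_mx (n k.+1 * r k) (r k.+1) B *m to_mx (r k.+1) (Qn d n k.+1) (XgeT d n r Ut k.+2).
  by move=> B; rewrite /repr !tm_mul.
exists dV; split.
  by apply/mxeq_tm; rewrite PE flatW reprE cLdV.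
move=> B HB; apply/mxeq_tm; move/mxeq_tm: HB; rewrite PE flatW reprE => HB.
have := congr1 (fun M => (to_mx (n k.+1 * Pn n k) (n k.+1 * r k) (kron (Pn n k) (r k) (@idm R) (Xle n r U k)))^T *m M *m
    (to_mx (r k.+1) (Qn d n k.+1) (XgeT d n r Ut k.+2))^T) HB.
rewrite /= !mulmxA OK !mul1mx -!mulmxA OT !mulmx1 => <-.
by rewrite cLdV /B0m !mulmxA.
Qed.
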